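(* Let $k$ be a field, $n\ge 1$, and let $Q_H$ be the quiver with vertices $x_1,\ldots,x_{n+1},y_1,\ldots,y_n$ and arrows $r_i:x_i\to y_i$, $l_i:y_i\to x_{i+1}$, $a_i:x_i\to x_{i+1}$ for $i=1,\ldots,n$. Put $m_{0i}=a_1\cdots a_{i-1}$ (the stationary path at $x_1$ if $i=1$), $A_i=r_il_i$, $T_i=A_ia_i^{-1}$ and $\alpha_i=m_{0i}T_im_{0i}^{-1}$, a closed walk at $x_1$. Let $i\ge1$, $k'\ge0$ with $i+k'\le n$, and let $I$ be an admissible ideal of $kQ_H$ in which $a_ia_{i+1}\cdots a_{i+k'}+A_iA_{i+1}\cdots A_{i+k'}$ is a minimal relation. Then $\tilde\alpha_i\tilde\alpha_{i+1}\cdots\tilde\alpha_{i+k'}=1$ in $\pi_1(Q_H,I,x_1)$.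
   Context: An ideal $I$ of $kQ$ is admissible if $F^m\subseteq I\subseteq F^2$ for some $m\ge2$, $F$ the arrow ideal. For vertices $x,y$, $I(x,y)=e_x(kQ)e_y\cap I$; a relation $\sum_{j=1}^{r}\lambda_j w_j\in I(x,y)$ ($\lambda_j\in k^*$, $w_j$ distinct paths $x\to y$) is minimal if $r\ge2$ and no proper nonempty subsum lies in $I(x,y)$. Walks are composable sequences of arrows and formal inverses $\alpha^{-1}$. Homotopy $\sim$ is the smallest equivalence relation on walks with $\alpha\alpha^{-1}\sim e_{s(\alpha)}$, $\alpha^{-1}\alpha\sim e_{t(\alpha)}$, $w_j\sim w_l$ for paths occurring in a common minimal relation of $I$, and $u\sim v\Rightarrow wuw'\sim wvw'$. $\pi_1(Q,I,x_1)$ is the group of homotopy classes $\tilde w$ of closed walks at $x_1$. *)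

(* Defs.v *)
From HB Require Import structures.
From mathcomp Require Import all_boot all_order all_algebra.
Set Implicit Arguments.
Unset Strict Implicit.
Unset Printing Implicit Defensive.
Import GRing.Theory.
Local Open Scope ring_scope.

Record quiver := Quiver {
  qV : finType;
  qA : finType;
  qs : qA -> qV;
  qt : qA -> qV
}.

(* A (candidate) path: start vertex and the list of arrows, composed left to
   right (a path a1 a2 ... goes first along a1).  [::] is the stationary path. *)
Definition qpath (Q : quiver) := (qV Q * seq (qA Q))%type.

Fixpoint valid_from (Q : quiver) (v : qV Q) (s : seq (qA Q)) : bool :=
  if s is a :: s' then (qs a == v) && valid_from (qt a) s' else true.

Fixpoint end_from (Q : quiver) (v : qV Q) (s : seq (qA Q)) : qV Q :=
  if s is a :: s' then end_from (qt a) s' else v.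

Definition pvalid (Q : quiver) (p : qpath Q) : bool := valid_from p.1 p.2.
Definition ptgt (Q : quiver) (p : qpath Q) : qV Q := end_from p.1 p.2.

(* Elements of the path algebra kQ: k-valued coefficient functions on paths,
   finitely supported on genuine paths. *)
Definition kQ (k : fieldType) (Q : quiver) := qpath Q -> k.

Section PathAlgebra.
Variables (k : fieldType) (Q : quiver).

Definition kQ_elem (f : kQ k Q) : Prop :=
  (exists s : seq (qpath Q), forall p, f p != 0 -> p \in s) /\
  (forall p, f p != 0 -> pvalid p).

Definition kQ_zero : kQ k Q := fun _ => 0.
Definition kQ_add (f g : kQ k Q) : kQ k Q := fun p => f p + g p.
Definition kQ_scale (c : k) (f : kQ k Q) : kQ k Q := fun p => c * f p.
(* product = concatenation of paths, extended bilinearly *)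
Definition kQ_mul (f g : kQ k Q) : kQ k Q := fun p =>
  \sum_(i < (size p.2).+1)
     f (p.1, take i p.2) * g (end_from p.1 (take i p.2), drop i p.2).

Record is_ideal (I : kQ k Q -> Prop) : Prop := {
  ideal_elem : forall f, I f -> kQ_elem f;
  ideal_ext : forall f g, I f -> f =1 g -> I g;
  ideal0 : I kQ_zero;
  idealD : forall f g, I f -> I g -> I (kQ_add f g);
  idealZ : forall c f, I f -> I (kQ_scale c f);
  idealMl : forall f g, I f -> kQ_elem g -> I (kQ_mul g f);
  idealMr : forall f g, I f -> kQ_elem g -> I (kQ_mul f g)
}.

(* F^m, the m-th power of the arrow ideal: elements supported on paths of
   length >= m *)
Definition arrowF (m : nat) (f : kQ k Q) : Prop :=
  kQ_elem f /\ forall p, f p != 0 -> (m <= size p.2)%N.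

Definition admissible (I : kQ k Q -> Prop) : Prop :=
  is_ideal I /\
  exists m : nat, (2 <= m)%N /\ (forall f, arrowF m f -> I f)
                            /\ (forall f, I f -> arrowF 2 f).

Definition lincomb (ws : seq (k * qpath Q)) : kQ k Q :=
  fun p => \sum_(c <- ws) c.1 * (c.2 == p)%:R.

Definition min_rel (I : kQ k Q -> Prop) (ws : seq (k * qpath Q)) : Prop :=
  [/\ (2 <= size ws)%N,
      all (fun c => c.1 != 0) ws,
      uniq (map snd ws),
      (exists x y : qV Q,
          all (fun c => [&& pvalid c.2, c.2.1 == x & ptgt c.2 == y]) ws)
    & I (lincomb ws) /\
      (forall ws', subseq ws' ws -> (0 < size ws' < size ws)%N ->
                   ~ I (lincomb ws'))].

(* letter (a, true) = arrow a ; (a, false) = formal inverse a^-1 *)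
Definition qwalk := (qV Q * seq (qA Q * bool))%type.

Definition lsrc (l : qA Q * bool) : qV Q := if l.2 then qs l.1 else qt l.1.
Definition ltgt (l : qA Q * bool) : qV Q := if l.2 then qt l.1 else qs l.1.

Fixpoint wvalid_from (v : qV Q) (s : seq (qA Q * bool)) : bool :=
  if s is l :: s' then (lsrc l == v) && wvalid_from (ltgt l) s' else true.
Fixpoint wend_from (v : qV Q) (s : seq (qA Q * bool)) : qV Q :=
  if s is l :: s' then wend_from (ltgt l) s' else v.

Definition wvalid (w : qwalk) : bool := wvalid_from w.1 w.2.
Definition wend (w : qwalk) : qV Q := wend_from w.1 w.2.

Definition path_walk (p : qpath Q) : qwalk := (p.1, map (fun a => (a, true)) p.2).

Inductive htp (I : kQ k Q -> Prop) : qwalk -> qwalk -> Prop :=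
| htp_refl w : wvalid w -> htp I w w
| htp_sym u v : htp I u v -> htp I v u
| htp_trans u v w : htp I u v -> htp I v w -> htp I u w
| htp_cancel1 a : htp I (qs a, [:: (a, true); (a, false)]) (qs a, [::])
| htp_cancel2 a : htp I (qt a, [:: (a, false); (a, true)]) (qt a, [::])
| htp_rel ws p q : min_rel I ws -> p \in map snd ws -> q \in map snd ws ->
    htp I (path_walk p) (path_walk q)
| htp_cong v w u u' w' : htp I u u' -> wvalid (v, w) -> wend (v, w) = u.1 ->
    wvalid (wend u, w') ->
    htp I (v, w ++ u.2 ++ w') (v, w ++ u'.2 ++ w').

End PathAlgebra.

Section QH.
Variable n : nat.

(* vertices: inl j = x_{j+1} (j < n+1), inr j = y_{j+1} (j < n)
   arrows:  inl (inl j) = r_{j+1}, inl (inr j) = l_{j+1}, inr j = a_{j+1} *)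
Definition QH_src (e : ('I_n + 'I_n) + 'I_n) : ('I_n.+1 + 'I_n) :=
  match e with
  | inl (inl j) => inl (widen_ord (leqnSn n) j)
  | inl (inr j) => inr j
  | inr j => inl (widen_ord (leqnSn n) j)
  end.
Definition QH_tgt (e : ('I_n + 'I_n) + 'I_n) : ('I_n.+1 + 'I_n) :=
  match e with
  | inl (inl j) => inr j
  | inl (inr j) => inl (lift ord0 j)
  | inr j => inl (lift ord0 j)
  end.

Definition QH : quiver := @Quiver ('I_n.+1 + 'I_n)%type (('I_n + 'I_n) + 'I_n)%type
  QH_src QH_tgt.

Definition QH_r (j : 'I_n) : qA QH := inl (inl j).
Definition QH_l (j : 'I_n) : qA QH := inl (inr j).
Definition QH_a (j : 'I_n) : qA QH := inr j.

(* x_i for 1-based i *)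
Definition QH_x (i : nat) : qV QH := inl (inord i.-1).
Definition QH_x1 : qV QH := inl ord0.

(* m_{0,j+1} = a_1 ... a_j, as a walk word *)
Definition QH_m0 (j : 'I_n) : seq (qA QH * bool) :=
  [seq (QH_a t, true) | t <- [seq t0 : 'I_n <- enum 'I_n | (t0 < j)%N]].

Definition winv (s : seq (qA QH * bool)) : seq (qA QH * bool) :=
  rev (map (fun l => (l.1, ~~ l.2)) s).

(* alpha_{j+1} = m_{0,j+1} r_{j+1} l_{j+1} a_{j+1}^-1 m_{0,j+1}^-1 *)
Definition QH_alpha (j : 'I_n) : seq (qA QH * bool) :=
  QH_m0 j ++ [:: (QH_r j, true); (QH_l j, true); (QH_a j, false)] ++ winv (QH_m0 j).

Definition QH_range (i k' : nat) : seq 'I_n :=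
  [seq j : 'I_n <- enum 'I_n | (i <= j.+1 <= i + k')%N].

Definition QH_rel (k : fieldType) (i k' : nat) : seq (k * qpath QH) :=
  [:: (1, (QH_x i, [seq QH_a j | j <- QH_range i k']));
      (1, (QH_x i, flatten [seq [:: QH_r j; QH_l j] | j <- QH_range i k']))].

End QH.

(* Main.v *)
Require Import Defs.
From HB Require Import structures.
From mathcomp Require Import all_boot all_order all_algebra.
From mathcomp Require Import zify.
Set Implicit Arguments. Unset Strict Implicit.

Section Gen.
Variables (k : fieldType) (Q : quiver) (I : kQ k Q -> Prop).

Definition wg (v : qV Q) (s : seq (qA Q * bool)) (v' : qV Q) :=
  wvalid_from v s /\ wend_from v s = v'.

Lemma wg_nil v : wg v [::] v. Proof. by []. Qed.
Lemma wg_cons v l s v' : lsrc l = v -> wg (ltgt l) s v' -> wg v (l :: s) v'.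
Proof. by move=> <- [h1 h2]; split => //=; rewrite eqxx. Qed.
Lemma wg_cat v s1 u s2 v' : wg v s1 u -> wg u s2 v' -> wg v (s1 ++ s2) v'.
Proof.
elim: s1 v => [|l s IH] v [h1 h2] h; first by move: h2 => /= ->.
case/andP: h1 => /eqP hl hs; apply: wg_cons => //; exact: IH.
Qed.
Lemma wg_of v s : wvalid_from v s -> wg v s (wend_from v s).
Proof. by []. Qed.

Definition flip (l : qA Q * bool) := (l.1, ~~ l.2).
Definition ginv (s : seq (qA Q * bool)) := rev (map flip s).
Lemma ginv_cons x s : ginv (x :: s) = ginv s ++ [:: flip x].
Proof. by rewrite /ginv /= rev_cons cats1. Qed.
Lemma ginv_cat s t : ginv (s ++ t) = ginv t ++ ginv s.
Proof. by rewrite /ginv map_cat rev_cat. Qed.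
Lemma ginvK s : ginv (ginv s) = s.
Proof.
rewrite /ginv map_rev revK -map_comp -[RHS]map_id; apply: eq_map => -[a b].
by rewrite /flip /= negbK.
Qed.
Lemma wg_ginv v s u : wg v s u -> wg u (ginv s) v.
Proof.
elim: s v u => [|l s IH] v u /=; first by move=> [_ /= ->].
move=> [/andP [/eqP hl hs] he]; rewrite ginv_cons.
apply: (wg_cat (IH _ _ (conj hs he))); apply: wg_cons; first by case: l {hl hs he} => a [].
by rewrite -hl; case: l {hl hs he} => a [].
Qed.
Lemma wg_flat v ws : (forall w, w \in ws -> wg v w v) -> wg v (flatten ws) v.
Proof.
elim: ws => [|w ws IH] h //=; apply: (wg_cat (h w (mem_head _ _))).
by apply: IH => x hx; apply: h; rewrite inE hx orbT.
Qed.

Lemma htp_refl' v W u : wg v W u -> htp I (v, W) (v, W).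
Proof. by case=> h _; apply: htp_refl. Qed.

Lemma htp_pair v w x w' W1 W2 :
  W1 = w ++ [:: x; flip x] ++ w' -> W2 = w ++ w' ->
  wg v w (lsrc x) -> wvalid_from (lsrc x) w' -> htp I (v, W1) (v, W2).
Proof.
move=> -> -> [hw he] hw'.
case: x he hw' => a [] he hw' /=.
- exact: (htp_cong (v:=v) (w:=w) (w':=w') (htp_cancel1 I a) hw he).
- exact: (htp_cong (v:=v) (w:=w) (w':=w') (htp_cancel2 I a) hw he).
Qed.

Lemma htp_seq v w s w' W1 W2 u :
  W1 = w ++ s ++ ginv s ++ w' -> W2 = w ++ w' ->
  wg v w u -> wvalid_from u s -> wvalid_from u w' -> htp I (v, W1) (v, W2).
Proof.
move=> -> ->; elim: s w u w' => [|x s IH] w u w' hw hs hw' /=.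
  apply: (htp_refl' (u := wend_from u w')); exact: wg_cat hw (wg_of hw').
case/andP: hs => /eqP hx hs.
apply: (htp_trans (v := (v, w ++ [:: x; flip x] ++ w'))).
  have := IH (w ++ [:: x]) (ltgt x) (flip x :: w') _ hs _.
  rewrite ginv_cons -!catA /=; apply.
    by apply: (wg_cat hw); apply: wg_cons.
  have e1 : lsrc (flip x) = ltgt x by case: x {hx hs IH} => a [].
  have e2 : ltgt (flip x) = lsrc x by case: x {e1 hx hs IH} => a [].
  by rewrite /= e1 eqxx e2 hx.
apply: (htp_pair (w := w) (x := x) (w' := w')) => //; first by rewrite hx.
by rewrite hx.
Qed.
End Gen.


Lemma filter_iota m len lo hi :
  filter (fun x => lo <= x < hi) (iota m len) =
  iota (maxn m lo) (minn (m + len) hi - maxn m lo).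
Proof.
elim: len m => [|len IH] m.
  by have -> : minn (m + 0) hi - maxn m lo = 0 by lia.
rewrite /= IH; case: ifP => H.
  case/andP: H => h1 h2.
  have -> : maxn m lo = m by lia.
  have -> : maxn m.+1 lo = m.+1 by lia.
  by have -> : minn (m + len.+1) hi - m = (minn (m.+1 + len) hi - m.+1).+1 by lia.
have : ~~ (lo <= m < hi) by rewrite H.
case/nandP; [rewrite -ltnNge => h | rewrite -leqNgt => h].
  have -> : maxn m.+1 lo = lo by lia.
  have -> : maxn m lo = lo by lia.
  by rewrite addSnnS.
have -> : minn (m.+1 + len) hi - maxn m.+1 lo = 0 by lia.
by have -> : minn (m + len.+1) hi - maxn m lo = 0 by lia.
Qed.

Section QHsec.
Variables (k : fieldType) (n' : nat) (I : kQ k (QH n'.+1) -> Prop).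
Local Notation N := n'.+1.
Local Notation QQ := (QH N).

Definition xv (j : nat) : qV QQ := inl (inord j).
Definition yv (j : nat) : qV QQ := inr (inord j).
Definition av (j : nat) : qA QQ := @QH_a N (inord j).
Definition rv (j : nat) : qA QQ := @QH_r N (inord j).
Definition lv (j : nat) : qA QQ := @QH_l N (inord j).

Lemma a_s j : j < N -> qs (av j) = xv j.
Proof. by move=> h; congr inl; apply: val_inj; rewrite /= !inordK //; lia. Qed.
Lemma a_t j : j < N -> qt (av j) = xv j.+1.
Proof. by move=> h; congr inl; apply: val_inj; rewrite /= /bump !inordK //; lia. Qed.
Lemma r_s j : j < N -> qs (rv j) = xv j.
Proof. by move=> h; congr inl; apply: val_inj; rewrite /= !inordK //; lia. Qed.
Lemma r_t j : qt (rv j) = yv j. Proof. by []. Qed.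
Lemma l_s j : qs (lv j) = yv j. Proof. by []. Qed.
Lemma l_t j : j < N -> qt (lv j) = xv j.+1.
Proof. by move=> h; congr inl; apply: val_inj; rewrite /= /bump !inordK //; lia. Qed.

Definition Ac m len := [seq (av t, true) | t <- iota m len].
Definition Ap m len := flatten [seq [:: (rv t, true); (lv t, true)] | t <- iota m len].

Lemma wg_Ac m len : m + len <= N -> wg (xv m) (Ac m len) (xv (m + len)).
Proof.
elim: len m => [|len IH] m h; first by rewrite addn0.
apply: wg_cons; first by apply: a_s; lia.
have -> : ltgt (av m, true) = xv m.+1 by apply: a_t; lia.
by rewrite -addSnnS; apply: IH; lia.
Qed.

Lemma wg_Ap m len : m + len <= N -> wg (xv m) (Ap m len) (xv (m + len)).
Proof.
elim: len m => [|len IH] m h; first by rewrite addn0.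
apply: wg_cons; first by apply: r_s; lia.
apply: wg_cons; first by [].
have -> : ltgt (lv m, true) = xv m.+1 by apply: l_t; lia.
by rewrite -addSnnS; apply: IH; lia.
Qed.

Lemma AcD m l1 l2 : Ac m (l1 + l2) = Ac m l1 ++ Ac (m + l1) l2.
Proof. by rewrite /Ac iotaD map_cat. Qed.
Lemma ApD m l1 l2 : Ap m (l1 + l2) = Ap m l1 ++ Ap (m + l1) l2.
Proof. by rewrite /Ap iotaD map_cat flatten_cat. Qed.

Lemma filterE (P : pred 'I_N) lo hi : hi <= N ->
  (forall t : 'I_N, P t = (lo <= t < hi)) ->
  filter P (enum 'I_N) = map inord (iota lo (hi - lo)).
Proof.
move=> hN hP; apply: (inj_map val_inj).
rewrite (eq_filter (a2 := preim val (fun x => lo <= x < hi))) //.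
rewrite -filter_map val_enum_ord filter_iota -map_comp.
have -> : maxn 0 lo = lo by lia.
have -> : minn (0 + N) hi = hi by lia.
rewrite map_id_in // => x; rewrite mem_iota => hx /=; rewrite inordK //; lia.
Qed.

Lemma rangeE J k' : J + k' < N -> QH_range N J.+1 k' = map inord (iota J k'.+1).
Proof.
move=> h; rewrite /QH_range (filterE (lo := J) (hi := J.+1 + k')); last first.
- by move=> t; rewrite ltnS.
- lia.
by have -> : J.+1 + k' - J = k'.+1 by lia.
Qed.

Lemma m0E j : j < N -> @QH_m0 N (inord j) = Ac 0 j.
Proof.
move=> h; rewrite /QH_m0 (filterE (lo := 0) (hi := j)); last first.
- by move=> t; rewrite inordK.
- lia.
by rewrite subn0 -map_comp.
Qed.

Lemma alE j : j < N -> @QH_alpha N (inord j) =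
  Ac 0 j ++ [:: (rv j, true); (lv j, true); (av j, false)] ++ ginv (Ac 0 j).
Proof. by move=> h; rewrite /QH_alpha m0E. Qed.

Lemma wg_al j : j < N -> wg (xv 0) (@QH_alpha N (inord j)) (xv 0).
Proof.
move=> h; rewrite alE //; apply: (wg_cat (wg_Ac (m := 0) (len := j) _)); first lia.
apply: wg_cons; first exact: r_s.
apply: wg_cons; first by [].
apply: wg_cons; first exact: (etrans (a_t h) (esym (l_t h))).
have -> : ltgt (av j, false) = xv j by apply: a_s.
apply: wg_ginv (wg_Ac (m := 0) (len := j) _); lia.
Qed.

Lemma x1E : QH_x1 N = xv 0.
Proof. by congr inl; apply: val_inj; rewrite /= inordK. Qed.

End QHsec.


Section M.
Variables (k : fieldType) (n' : nat) (I : kQ k (QH n'.+1) -> Prop).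
Local Notation N := n'.+1.

Lemma wg_W J K : J + K < N ->
  wg (xv n' 0) (flatten [seq @QH_alpha N (inord j) | j <- iota J K.+1]) (xv n' 0).
Proof.
move=> h; apply: wg_flat => w /mapP [j]; rewrite mem_iota => hj ->.
apply: wg_al; lia.
Qed.

Lemma stepS J K : J + K < N ->
  htp I (xv n' 0, flatten [seq @QH_alpha N (inord j) | j <- iota J K.+1])
        (xv n' 0, Ac n' 0 J ++ Ap n' J K.+1 ++ (av n' (J + K), false) :: ginv (Ac n' 0 (J + K))).
Proof.
elim: K => [|K IH] h.
  have h' : J < N by lia.
  rewrite /= addn0 cats0.
  have := wg_al h'; rewrite alE // => hw.
  by apply: htp_refl' hw.
have hL : J + K < N by lia.
have {}IH := IH hL.
have -> : flatten [seq @QH_alpha N (inord j) | j <- iota J K.+2] =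
  flatten [seq @QH_alpha N (inord j) | j <- iota J K.+1] ++ @QH_alpha N (inord (J + K.+1)).
  by rewrite -[K.+2]addn1 iotaD map_cat flatten_cat /= cats0.
rewrite !addnS.
rewrite addnS in h.
set L := J + K in IH hL h *.
have hW3 : wvalid (wend (xv n' 0, flatten [seq @QH_alpha N (inord j) | j <- iota J K.+1]),
                  @QH_alpha N (inord L.+1)).
  rewrite /wend /= (proj2 (wg_W hL)).
  by case: (wg_al h).
apply: (htp_trans (v := (xv n' 0, (Ac n' 0 J ++ Ap n' J K.+1 ++ (av n' L, false) :: ginv (Ac n' 0 L)) ++ @QH_alpha N (inord L.+1)))).
  exact: (htp_cong (v := xv n' 0) (w := [::]) IH erefl erefl hW3).
rewrite (alE h).
have AcL : Ac n' 0 L.+1 = Ac n' 0 L ++ [:: (av n' L, true)] by rewrite -[L.+1]addn1 AcD.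
apply: (htp_trans (v := (xv n' 0, (Ac n' 0 J ++ Ap n' J K.+1 ++ [:: (av n' L, false)]) ++ (av n' L, true) :: [:: (rv n' L.+1, true); (lv n' L.+1, true);
                           (av n' L.+1, false)] ++ ginv (Ac n' 0 L.+1)))).
  apply: (htp_seq I (w := Ac n' 0 J ++ Ap n' J K.+1 ++ [:: (av n' L, false)])
                 (s := ginv (Ac n' 0 L))
                 (w' := (av n' L, true) :: [:: (rv n' L.+1, true); (lv n' L.+1, true);
                           (av n' L.+1, false)] ++ ginv (Ac n' 0 L.+1))
                 (u := xv n' L)).
  - by rewrite ginvK AcL -!catA.
  - by [].
  - apply: (wg_cat (wg_Ac (m := 0) (len := J) _)); first lia.
    apply: (wg_cat (wg_Ap (m := J) (len := K.+1) _)); first lia.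
    apply: wg_cons; first by rewrite addnS; apply: a_t; lia.
    have -> : ltgt (av n' L, false) = xv n' L by apply: a_s; lia.
    exact: wg_nil.
  - by case: (wg_ginv (wg_Ac (m := 0) (len := L) (ltnW hL))).
  - apply: (proj1 (wg_cons (v' := xv n' 0) _ _)); first by apply: a_s; lia.
    have -> : ltgt (av n' L, true) = xv n' L.+1 by apply: a_t; lia.
    apply: wg_cons; first exact: r_s.
    apply: wg_cons; first by [].
    apply: wg_cons; first exact: (etrans (a_t h) (esym (l_t h))).
    have -> : ltgt (av n' L.+1, false) = xv n' L.+1 by apply: a_s.
    exact: (wg_ginv (wg_Ac (m := 0) (len := L.+1) (ltnW h))).
apply: (htp_pair I (w := Ac n' 0 J ++ Ap n' J K.+1) (x := (av n' L, false))
                 (w' := [:: (rv n' L.+1, true); (lv n' L.+1, true);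
                           (av n' L.+1, false)] ++ ginv (Ac n' 0 L.+1))).
- by rewrite -!catA.
- by rewrite -[K.+2]addn1 ApD -!catA /L addnS.
- apply: (wg_cat (wg_Ac (m := 0) (len := J) _)); first lia.
  have -> : lsrc (av n' L, false) = xv n' (J + K.+1) by rewrite addnS; apply: a_t; lia.
  apply: wg_Ap; lia.
- have -> : lsrc (av n' L, false) = xv n' L.+1 by apply: a_t; lia.
  apply: (proj1 (wg_cons (v' := xv n' 0) _ _)); first exact: r_s.
  apply: wg_cons; first by [].
  apply: wg_cons; first exact: (etrans (a_t h) (esym (l_t h))).
  have -> : ltgt (av n' L.+1, false) = xv n' L.+1 by apply: a_s.
  exact: (wg_ginv (wg_Ac (m := 0) (len := L.+1) (ltnW h))).
Qed.
End M.

Theorem mainTheorem5 (k : fieldType) (n : nat) (hn : (1 <= n)%N)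
  (i k' : nat) (hi : (1 <= i)%N) (hik : (i + k' <= n)%N)
  (I : kQ k (QH n) -> Prop) (hI : admissible I)
  (hrel : min_rel I (QH_rel n k i k')) :
  htp I (QH_x1 n, flatten [seq QH_alpha j | j <- QH_range n i k'])
        (QH_x1 n, [::]).
Proof.
move: I hI hrel hik; case: n hn => [//|n'] _ I _ hrel hik.
case: i hi hik hrel => [//|J] _ hik hrel.
have hJ : J + k' < n'.+1 by lia.
have hr : htp I (xv n' J, Ap n' J k'.+1) (xv n' J, Ac n' J k'.+1).
  have := htp_rel (p := (QH_x n'.+1 J.+1, flatten [seq [:: QH_r j; QH_l j] | j <- QH_range n'.+1 J.+1 k']))
     (q := (QH_x n'.+1 J.+1, [seq QH_a j | j <- QH_range n'.+1 J.+1 k'])) hrel.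
  rewrite /path_walk /= rangeE // map_flatten -!map_comp.
  by apply; rewrite !inE eqxx ?orbT.
rewrite rangeE // x1E.
have -> : [seq QH_alpha j | j <- map inord (iota J k'.+1)] =
          [seq @QH_alpha n'.+1 (inord j) | j <- iota J k'.+1] by rewrite -map_comp.
apply: htp_trans (stepS I (J:=J) (K:=k') hJ) _.
set L := J + k'.
have hL : L.+1 <= n'.+1 by rewrite /L; lia.
have wL : wvalid_from (xv n' L.+1) ((av n' L, false) :: ginv (Ac n' 0 L)).
  apply: (proj1 (wg_cons (v' := xv n' 0) _ _)); first by apply: a_t.
  have -> : ltgt (av n' L, false) = xv n' L by apply: a_s.
  exact: (wg_ginv (wg_Ac (m := 0) (len := L) (ltnW hL))).
apply: (htp_trans (v := (xv n' 0, Ac n' 0 J ++ Ac n' J k'.+1 ++ (av n' L, false) :: ginv (Ac n' 0 L)))).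
  apply: (htp_cong (v := xv n' 0) (w := Ac n' 0 J) hr).
  - by case: (wg_Ac (m := 0) (len := J) (ltnW (leq_ltn_trans (leq_addr _ _) hJ))).
  - by case: (wg_Ac (m := 0) (len := J) (ltnW (leq_ltn_trans (leq_addr _ _) hJ))).
  - have e : wend (xv n' J, Ap n' J k'.+1) = xv n' L.+1.
      by rewrite -addnS; apply: (proj2 (wg_Ap (m := J) (len := k'.+1) _)); rewrite addnS.
    by rewrite e.
apply: (htp_seq I (w := [::]) (s := Ac n' 0 L.+1) (w' := [::]) (u := xv n' 0)).
- have AcL : Ac n' 0 L.+1 = Ac n' 0 L ++ [:: (av n' L, true)] by rewrite -[L.+1]addn1 AcD.
  rewrite cats0 catA -(AcD n' 0 J k'.+1) addnS -/L.
  by rewrite AcL ginv_cat.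
- by [].
- exact: wg_nil.
- by case: (wg_Ac (m := 0) (len := L.+1) hL).
- by [].
Qed.
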